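(* There is a constant $C>0$, independent of the mesh, such that every solution $u_h\in V_h$ of the scheme satisfies $\|u_h\|_{L^\infty(\overline\Omega)}\le C$. Furthermore, let $p\in\mathbb R^d$, let $M\ge \|f\|_{L^\infty(\Omega)}\max_{B\in\mathbb S_1}\sqrt[d]{\det B}=\|f\|_{L^\infty(\Omega)}/d$, and let $\zeta(x)=\frac M2|x-p|^2$. Then, for every mesh, $u_h-I_h\zeta$ attains its minimum over $\overline\Omega$ at a boundary node and $u_h+I_h\zeta$ attains its maximum over $\overline\Omega$ at a boundary node.
   Context: Standing setting: $d\ge2$, $\Omega\subset\mathbb R^d$ a bounded open strictly convex domain, $f:\Omega\to[0,\infty)$ bounded and continuous, $g:\partial\Omega\to\mathbb R$ bounded and continuous. $\mathbb S$: real symmetric $d\times d$ matrices; $\mathbb S_+$: positive semidefinite ones; $\mathbb S_1=\{B\in\mathbb S_+:\operatorname{tr}B=1\}$; $|\cdot|$ is the Euclidean norm. Mesh: $\mathcal T_h$ is a shape-regular simplicial partition whose union $\Omega_h$ satisfies $\Omega_h\subset\Omega$; its nodes are $\mathcal N_h=\mathcal N_h^I\cup\mathcal N_h^B$, where the boundary nodes $\mathcal N_h^B$ (nodes on $\partial\Omega_h$) lie on $\partial\Omega$ and $\mathcal N_h^I$ are the interior nodes. $V_h$ is the space of continuous piecewise linear functions on $\mathcal T_h$ and $I_h$ the nodal interpolant onto $V_h$; functions on $\Omega_h$ (in particular elements of $V_h$) are extended to $\overline\Omega$ by being constant along the outer normal directions of $\partial\Omega_h$. $B(\overline\Omega)$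 denotes the bounded real functions on $\overline\Omega$. Controls: $\mathbf F\subset\mathbb R^{d\times d}\times\{\text{diagonal }d\times d\text{ matrices}\}$ is compact, the map $(\sigma,\lambda)\mapsto\sigma\lambda\sigma^T$ is a bijection from $\mathbf F$ onto $\mathbb S_1$, and every $\lambda$ occurring in $\mathbf F$ has nonnegative diagonal entries and the same trace $C>0$. For $B\in\mathbb S_1$, $(\sigma(B),\lambda(B))$ denotes its preimage; $\sigma_j$ is the $j$th column of $\sigma$ and $\lambda_j$ the $j$th diagonal entry of $\lambda$. Stencil size: $k=k(h,x)>0$ is such that $x\pm k(h,x)\sigma_j\in\overline\Omega_h$ for every $x\in\Omega_h$ and every column $\sigma_j$ of every $\sigma$ with $(\sigma,\lambda)\in\mathbf F$. Scheme: for $B\in\mathbb S_1$, $s\in\mathbb R$, $\phi\in B(\overline\Omega)$, with $(\sigma,\lambda)=(\sigma(B),\lambda(B))$ and $k=k(h,x_i)$, set $L_h^B(s,\phi)(x_i)=-\sum_{j=1}^d\lambda_j\frac{\phi(x_i-k\sigma_j)-2s+\phi(x_i+k\sigma_j)}{k^2}+f(x_i)\sqrt[d]{\det B}$ for $x_i\in\mathcal N_h^I$, and $L_h^B(s,\phi)(x_i)=s-g(x_i)$ for $x_i\in\mathcal N_h^B$; $H_h(s,\phi)(x_i)=\sup_{B\in\mathbb S_1}L_h^B(s,\phi)(x_i)$. The discrete solution $u_h\in V_h$ is the (unique) function with $H_h(u_h(x_i),u_h)(x_i)=0$ for all $x_i\in\mathcal N_h$. *)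

(* Defs.v *)
From Stdlib Require Import Reals List.
From mathcomp Require Import all_boot.
From mathcomp Require Import fingroup perm.
Set Implicit Arguments. Unset Strict Implicit. Unset Printing Implicit Defensive.
Local Open Scope R_scope.

Definition pt (d : nat) := 'I_d -> R.
Definition mat (d : nat) := 'I_d -> 'I_d -> R.

Definition rsum {I : finType} (F : I -> R) : R := \big[Rplus/0]_(i : I) F i.
Definition rprod {I : finType} (F : I -> R) : R := \big[Rmult/1]_(i : I) F i.

Definition dot {d} (x y : pt d) : R := rsum (fun i => x i * y i).
Definition norm {d} (x : pt d) : R := sqrt (dot x x).
Definition psub {d} (x y : pt d) : pt d := fun i => x i - y i.

Definition det {d} (A : mat d) : R :=
  rsum (fun s : 'S_d => (if odd_perm s then -1 else 1) * rprod (fun i => A i (s i))).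
Definition tr {d} (A : mat d) : R := rsum (fun i => A i i).

Definition symmetric {d} (A : mat d) : Prop := forall i j, A i j = A j i.
Definition psd {d} (A : mat d) : Prop :=
  symmetric A /\ forall v : pt d, 0 <= rsum (fun i => rsum (fun j => v i * A i j * v j)).
Definition S1 {d} (B : mat d) : Prop := psd B /\ tr B = 1.

Definition nroot (d : nat) (x : R) : R :=
  if Rle_dec x 0 then 0 else Rpower x (/ INR d).

(** sigma * diag(lambda) * sigma^T ; lambda = vector of diagonal entries *)
Definition ctrl_mat {d} (s : mat d) (l : pt d) : mat d :=
  fun i j => rsum (fun k => s i k * l k * s j k).

Definition is_open {d} (A : pt d -> Prop) : Prop :=
  forall x, A x -> exists r, 0 < r /\ forall y, norm (psub y x) < r -> A y.
Definition interior {d} (A : pt d -> Prop) (x : pt d) : Prop :=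
  exists r, 0 < r /\ forall y, norm (psub y x) < r -> A y.
Definition closure {d} (A : pt d -> Prop) (x : pt d) : Prop :=
  forall e, 0 < e -> exists y, A y /\ norm (psub x y) < e.
Definition bdry {d} (A : pt d -> Prop) (x : pt d) : Prop :=
  closure A x /\ ~ interior A x.
Definition bounded_set {d} (A : pt d -> Prop) : Prop :=
  exists Rb, forall x, A x -> norm x <= Rb.
Definition strictly_convex {d} (A : pt d -> Prop) : Prop :=
  forall x y t, closure A x -> closure A y -> x <> y -> 0 < t < 1 ->
    A (fun i => (1 - t) * x i + t * y i).
Definition bounded_on {d} (A : pt d -> Prop) (h : pt d -> R) : Prop :=
  exists Rb, forall x, A x -> Rabs (h x) <= Rb.
Definition cont_on {d} (A : pt d -> Prop) (h : pt d -> R) : Prop :=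
  forall x, A x -> forall e, 0 < e -> exists dl, 0 < dl /\
    forall y, A y -> norm (psub y x) < dl -> Rabs (h y - h x) < e.

(** Compactness of the control set F in R^{dxd} x R^d (Heine-Borel). *)
Definition cdist {d} (s1 : mat d) (l1 : pt d) (s2 : mat d) (l2 : pt d) : R :=
  sqrt (rsum (fun i => rsum (fun j => (s1 i j - s2 i j) ^ 2))
        + rsum (fun i => (l1 i - l2 i) ^ 2)).
Definition compact_ctrl {d} (F : mat d -> pt d -> Prop) : Prop :=
  (exists Rb, forall s l, F s l -> cdist s l (fun _ _ => 0) (fun _ => 0) <= Rb) /\
  (forall s l, (forall e, 0 < e -> exists s' l', F s' l' /\ cdist s l s' l' < e) -> F s l).

Definition simplex (d : nat) := 'I_d.+1 -> pt d.
Definition in_hull {d} (S : simplex d) (P : 'I_d.+1 -> Prop) (x : pt d) : Prop :=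
  exists w : 'I_d.+1 -> R, (forall k, 0 <= w k) /\ rsum w = 1 /\
    (forall k, ~ P k -> w k = 0) /\ forall i, x i = rsum (fun k => w k * S k i).
Definition in_simplex {d} (S : simplex d) (x : pt d) : Prop := in_hull S (fun _ => True) x.
Definition nondeg {d} (S : simplex d) : Prop :=
  det (fun i j => S (lift ord0 i) j - S ord0 j) <> 0.
Definition is_vertex {d} (S : simplex d) (y : pt d) : Prop := exists k, S k = y.
Definition conforming {d} (T : list (simplex d)) : Prop :=
  forall S1 S2, In S1 T -> In S2 T -> forall x, in_simplex S1 x -> in_simplex S2 x ->
    in_hull S1 (fun k => is_vertex S2 (S1 k)) x.
Definition mesh_cl {d} (T : list (simplex d)) (x : pt d) : Prop :=
  exists S, In S T /\ in_simplex S x.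
Definition mesh_int {d} (T : list (simplex d)) : pt d -> Prop := interior (mesh_cl T).
Definition node {d} (T : list (simplex d)) (x : pt d) : Prop :=
  exists S, In S T /\ is_vertex S x.
Definition bnode {d} (T : list (simplex d)) (x : pt d) : Prop :=
  node T x /\ bdry (mesh_cl T) x.
Definition inode {d} (T : list (simplex d)) (x : pt d) : Prop :=
  node T x /\ mesh_int T x.

Definition admissible_mesh {d} (Om : pt d -> Prop) (T : list (simplex d)) : Prop :=
  (forall S, In S T -> nondeg S) /\ conforming T /\
  (forall x, mesh_int T x -> Om x) /\
  (forall x, bnode T x -> bdry Om x).
Definition shape_reg {d} (kappa : R) (T : list (simplex d)) : Prop :=
  forall S, In S T -> exists (c : pt d) rho, 0 < rho /\
    (forall y, norm (psub y c) < rho -> in_simplex S y) /\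
    forall x y, in_simplex S x -> in_simplex S y -> norm (psub x y) <= kappa * rho.

Definition Vh {d} (T : list (simplex d)) (u : pt d -> R) : Prop :=
  forall S, In S T -> exists (a : R) (b : pt d), forall x, in_simplex S x -> u x = a + dot b x.
Definition interp {d} (T : list (simplex d)) (z v : pt d -> R) : Prop :=
  Vh T v /\ forall x, node T x -> v x = z x.
(** extension to \overline\Omega, constant along outer normal directions of
    \partial\Omega_h: a function phi on \overline\Omega_h is extended by phi o e *)
Definition valid_ext {d} (Om : pt d -> Prop) (T : list (simplex d)) (e : pt d -> pt d) : Prop :=
  forall x, closure Om x ->
    (mesh_cl T x -> e x = x) /\
    (~ mesh_cl T x -> bdry (mesh_cl T) (e x) /\
       exists r, 0 < r /\ forall z, mesh_cl T z -> norm (psub z (e x)) < r ->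
         dot (psub x (e x)) (psub z (e x)) <= 0).

Definition stencil_ok {d} (F : mat d -> pt d -> Prop) (T : list (simplex d)) (k : pt d -> R) : Prop :=
  forall x, mesh_int T x -> 0 < k x /\
    forall s l (j : 'I_d), F s l ->
      mesh_cl T (fun i => x i - k x * s i j) /\ mesh_cl T (fun i => x i + k x * s i j).

Definition LhB {d} (f g : pt d -> R) (sig : mat d -> mat d) (lam : mat d -> pt d)
  (T : list (simplex d)) (k : pt d -> R) (B : mat d) (s : R) (phi : pt d -> R)
  (x : pt d) (r : R) : Prop :=
  (inode T x /\
     r = - rsum (fun j => lam B j *
            (phi (fun i => x i - k x * sig B i j) - 2 * s + phi (fun i => x i + k x * sig B i j))
            / (k x ^ 2))
         + f x * nroot d (det B)) \/
  (bnode T x /\ r = s - g x).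

Definition Hh_zero {d} (f g : pt d -> R) sig lam T k (s : R) (phi : pt d -> R) (x : pt d) : Prop :=
  is_lub (fun r => exists B : mat d, S1 B /\ LhB f g sig lam T k B s phi x r) 0.

Definition solves {d} (f g : pt d -> R) sig lam (T : list (simplex d)) k (e : pt d -> pt d)
  (u : pt d -> R) : Prop :=
  Vh T u /\ forall x, node T x -> Hh_zero f g sig lam T k (u x) (fun y => u (e y)) x.

Definition vsum {d} (l : pt d) : R := rsum (fun j : 'I_d => l j).

(* Main.v *)
From HB Require Import structures.
From Stdlib Require Import Reals Lra Lia List FunctionalExtensionality Classical.
From mathcomp Require Import all_boot all_algebra fingroup perm Rstruct.
Require Import Defs.
Import GRing.Theory.
Set Implicit Arguments. Unset Strict Implicit. Unset Printing Implicit Defensive.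
Local Open Scope R_scope.

HB.instance Definition _ := Monoid.isComLaw.Build R 0 Rplus (fun a b c => esym (Rplus_assoc a b c)) Rplus_comm Rplus_0_l.

Lemma rsum_ext {I : finType} (F G : I -> R) : (forall i, F i = G i) -> rsum F = rsum G.
Proof. move=> H; rewrite /rsum; apply: eq_bigr => i _; exact: H. Qed.
Lemma rsum_add {I : finType} (F G : I -> R) : rsum (fun i => F i + G i) = rsum F + rsum G.
Proof. by rewrite /rsum big_split. Qed.
Lemma rsum_scal {I : finType} (c : R) (F : I -> R) : rsum (fun i => c * F i) = c * rsum F.
Proof. rewrite /rsum. apply: (big_ind2 (fun a b => a = c * b)).
 - lra. - move=> ? ? ? ? -> ->; lra. - by []. Qed.
Lemma rsum_opp {I : finType} (F : I -> R) : rsum (fun i => - F i) = - rsum F.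
Proof. have -> : - rsum F = (-1) * rsum F by lra. rewrite -rsum_scal. apply: rsum_ext=> i; lra. Qed.
Lemma rsum_sub {I : finType} (F G : I -> R) : rsum (fun i => F i - G i) = rsum F - rsum G.
Proof. rewrite /Rminus -rsum_opp -rsum_add. done. Qed.
Lemma rsum_zero {I : finType} : rsum (fun _ : I => 0) = 0.
Proof. rewrite /rsum big1 //. Qed.
Lemma rsum_exch {I J : finType} (F : I -> J -> R) : rsum (fun i => rsum (fun j => F i j)) = rsum (fun j => rsum (fun i => F i j)).
Proof. rewrite /rsum. exact: exchange_big. Qed.
Lemma rsum_le {I : finType} (F G : I -> R) : (forall i, F i <= G i) -> rsum F <= rsum G.
Proof. move=> H. rewrite /rsum. apply: (big_ind2 (fun a b => a <= b)) => //; [lra| move=> *; lra]. Qed.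
Lemma rsum_ge0 {I : finType} (F : I -> R) : (forall i, 0 <= F i) -> 0 <= rsum F.
Proof. move=> H; rewrite -(@rsum_zero I); exact: rsum_le. Qed.
Lemma rsum_recl n (F : 'I_n.+1 -> R) : rsum F = F ord0 + rsum (fun i : 'I_n => F (lift ord0 i)).
Proof. by rewrite /rsum big_ord_recl. Qed.
Lemma rsum_pred1 {I : finType} (i0 : I) (F : I -> R) : rsum (fun i => if i == i0 then F i else 0) = F i0.
Proof. rewrite /rsum (bigD1 i0) //= eqxx big1 ?Rplus_0_r //. move=> i /negPf ->. done. Qed.
Lemma rsum_pred1' {I : finType} (i0 : I) (F : I -> R) : rsum (fun i => if i0 == i then F i else 0) = F i0.
Proof. rewrite -(rsum_pred1 i0 F). apply: rsum_ext => i. by rewrite eq_sym. Qed.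
Lemma rsum_term {I : finType} (F : I -> R) i0 : (forall i, 0 <= F i) -> F i0 <= rsum F.
Proof. move=> H. rewrite /rsum (bigD1 i0) //=. 
 have : 0 <= \big[Rplus/0]_(i | i != i0) F i.
 { apply: (big_ind (fun a => 0 <= a)) => //; [lra | move=> *; lra]. }
 lra. Qed.
Lemma rsum_abs {I : finType} (F : I -> R) : Rabs (rsum F) <= rsum (fun i => Rabs (F i)).
Proof. rewrite /rsum. apply: (big_ind2 (fun a b => Rabs a <= b)).
 - rewrite Rabs_R0; lra.
 - move=> a b c e H1 H2. apply: Rle_trans (Rabs_triang _ _) _. lra.
 - move=> i _; lra. Qed.
Lemma rsum_const {I : finType} (c : R) : rsum (fun _ : I => c) = INR #|I| * c.
Proof. rewrite /rsum. rewrite big_const. elim: #|I| => [|n IH]. simpl; lra.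
 rewrite iterS IH S_INR. lra. Qed.
Definition nsq {d} (x : pt d) := dot x x.
Definition wts {d} (S : simplex d) (a : 'I_d.+1 -> R) (y : pt d) :=
  (forall k, 0 <= a k) /\ rsum a = 1 /\ forall i, y i = rsum (fun k => a k * S k i).

Lemma in_simplex_wts d (S : simplex d) y : in_simplex S y <-> exists a, wts S a y.
Proof. split.
 - move=> [a [H1 [H2 [_ H3]]]]. by exists a.
 - move=> [a [H1 [H2 H3]]]. exists a. split; [done|split; [done|split; [move=> k Hk; exfalso; exact: Hk I|done]]]. Qed.

Lemma vertex_wts d (S : simplex d) k0 : wts S (fun k => if k == k0 then 1 else 0) (S k0).
Proof. split; [move=> k; case: (k == k0); lra|split].
 - rewrite (rsum_pred1 k0 (fun _ => 1)). done.
 - move=> i. rewrite -(rsum_pred1 k0 (fun k => S k i)). apply: rsum_ext => k. case: (k == k0); lra. Qed.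

Lemma vertex_in d (S : simplex d) k0 : in_simplex S (S k0).
Proof. apply/in_simplex_wts. eexists; exact: vertex_wts. Qed.

Lemma affine_comb d (S : simplex d) (u : pt d -> R) c b a y :
  (forall y, in_simplex S y -> u y = c + dot b y) -> wts S a y ->
  u y = rsum (fun k => a k * u (S k)).
Proof. move=> Hu Hw. have Hy : in_simplex S y by apply/in_simplex_wts; exists a.
 rewrite Hu //. 
 rewrite (rsum_ext (G := fun k => a k * c + a k * dot b (S k))); last first.
 { move=> k. rewrite Hu; [lra | exact: vertex_in]. }
 rewrite rsum_add. move: Hw => [_ [H1 H2]].
 have -> : rsum (fun k => a k * c) = c.
 { rewrite (rsum_ext (G := fun k => c * a k)); last by move=> k; lra. rewrite rsum_scal H1; lra. }
 congr (_ + _). rewrite /dot.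
 rewrite (rsum_ext (F := fun i => b i * y i) (G := fun i => rsum (fun k => b i * (a k * S k i)))); last first.
 { move=> i. rewrite H2 -rsum_scal. done. }
 rewrite rsum_exch. apply: rsum_ext => k. rewrite -rsum_scal. apply: rsum_ext => i. lra. Qed.

Lemma jensen1 n (a x : 'I_n -> R) (y p : R) : rsum a = 1 -> (forall k, 0 <= a k) ->
  y = rsum (fun k => a k * x k) -> (y - p) ^ 2 <= rsum (fun k => a k * (x k - p) ^ 2).
Proof. move=> H1 H0 Hy.
 rewrite (rsum_ext (G := fun k => a k * (x k - y) ^ 2 + ((2 * (y - p)) * (a k * x k) + (- (2 * (y - p) * y) + (y - p) ^2) * a k))); last by move=> k; ring.
 rewrite rsum_add rsum_add rsum_scal rsum_scal -Hy H1.
 have : 0 <= rsum (fun k => a k * (x k - y) ^ 2).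
 { apply: rsum_ge0 => k. apply: Rmult_le_pos => //. apply: pow2_ge_0. }
 nra. Qed.

Lemma jensen d (S : simplex d) a y p : wts S a y ->
  nsq (psub y p) <= rsum (fun k => a k * nsq (psub (S k) p)).
Proof. move=> [H0 [H1 H2]]. rewrite /nsq /dot /psub.
 rewrite (rsum_ext (F := fun k => a k * _) (G := fun k => rsum (fun i => a k * (S k i - p i) ^ 2))); last first.
 { move=> k. rewrite -rsum_scal. apply: rsum_ext => i. ring. }
 rewrite rsum_exch. apply: rsum_le => i.
 have := @jensen1 _ a (fun k => S k i) (y i) (p i) H1 H0 (H2 i). 
 have -> : (y i - p i) * (y i - p i) = (y i - p i) ^ 2 by ring. done. Qed.

Lemma nsq_ge0 d (x : pt d) : 0 <= nsq x.
Proof. apply: rsum_ge0 => i. nra. Qed.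

Lemma norm2 d (x : pt d) : norm x ^ 2 = nsq x.
Proof. rewrite /norm /= Rmult_1_r sqrt_sqrt //. exact: nsq_ge0. Qed.

Lemma coord_le_norm d (x : pt d) i : Rabs (x i) <= norm x.
Proof. rewrite /norm. rewrite -sqrt_Rsqr_abs. apply: sqrt_le_1_alt.
 rewrite /Rsqr. rewrite /dot. apply: (rsum_term (F := fun i => x i * x i)) => j. nra. Qed.

Lemma norm_psub_sym d (x y : pt d) : norm (psub x y) = norm (psub y x).
Proof. rewrite /norm /dot /psub. f_equal. apply: rsum_ext => i. ring. Qed.

Lemma norm_psub_self d (x : pt d) : norm (psub x x) = 0.
Proof. rewrite /norm /dot /psub. rewrite (rsum_ext (G := fun _ => 0)); last by move=> i; ring.
 rewrite rsum_zero sqrt_0 //. Qed.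

Lemma second_diff d (x a p : pt d) :
  nsq (psub (fun i => x i - a i) p) - 2 * nsq (psub x p) + nsq (psub (fun i => x i + a i) p) = 2 * nsq a.
Proof. rewrite /nsq /dot /psub. rewrite -rsum_scal -rsum_scal -rsum_sub -rsum_add.
 apply: rsum_ext => i. ring. Qed.
Lemma closure_self d (A : pt d -> Prop) x : A x -> closure A x.
Proof. move=> Ax e He. exists x. split=>//. rewrite norm_psub_self. lra. Qed.

Lemma conv_comb d (C : pt d -> Prop) :
 (forall x y t, C x -> C y -> 0 <= t <= 1 -> C (fun i => (1 - t) * x i + t * y i)) ->
 forall n (P : 'I_n.+1 -> pt d) a, (forall k, 0 <= a k) -> rsum a = 1 -> (forall k, C (P k)) ->
 C (fun i => rsum (fun k => a k * P k i)).
Proof. move=> Hc. elim=> [|n IH] P a H0 H1 HP.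
 - have Ha : a ord0 = 1. { rewrite rsum_recl in H1. rewrite /rsum big_ord0 in H1. lra. }
   have -> : (fun i => rsum (fun k => a k * P k i)) = P ord0.
   { apply: functional_extensionality => i. rewrite rsum_recl /rsum big_ord0 Ha. lra. }
   exact: HP.
 - rewrite rsum_recl in H1. set s := rsum _ in H1.
   have Hs0 : 0 <= s by apply: rsum_ge0 => k; exact: H0.
   case: (Req_dec s 0) => Hs.
   + have Hz : forall k, a (lift ord0 k) = 0.
     { move=> k. have := rsum_term (F := fun k => a (lift ord0 k)) k (fun k => H0 _).
       rewrite -/s Hs. have := H0 (lift ord0 k). lra. }
     have -> : (fun i => rsum (fun k => a k * P k i)) = P ord0.
     { apply: functional_extensionality => i. rewrite rsum_recl.
       rewrite (rsum_ext (G := fun _ => 0)); last by move=> k; rewrite Hz; lra.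
       rewrite rsum_zero. have -> : a ord0 = 1 by lra. lra. }
     exact: HP.
   + have Hsp : 0 < s by lra.
     have HC := IH (fun k => P (lift ord0 k)) (fun k => a (lift ord0 k) / s).
     have HCy : C (fun i => rsum (fun k => a (lift ord0 k) / s * P (lift ord0 k) i)).
     { apply: HC.
       - move=> k. rewrite /Rdiv; apply: Rmult_le_pos => //; apply: Rlt_le; apply: Rinv_0_lt_compat => //.
       - rewrite (rsum_ext (G := fun k => / s * a (lift ord0 k))); last by move=> k; rewrite /Rdiv; ring.
         rewrite rsum_scal. change (/ s * s = 1). field. lra.
       - move=> k; exact: HP. }
     have Ha0 := H0 ord0. have Hs1 : s <= 1 by lra. have := Hc _ _ s (HP ord0) HCy (conj Hs0 Hs1).
     have -> : (fun i => (1 - s) * P ord0 i + s * rsum (fun k => a (lift ord0 k) / s * P (lift ord0 k) i))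
              = (fun i => rsum (fun k => a k * P k i)).
     { apply: functional_extensionality => i. rewrite [in RHS]rsum_recl -rsum_scal.
       have -> : 1 - s = a ord0 by lra. congr (_ + _). apply: rsum_ext => k. field. lra. }
     done. Qed.

Lemma closure_conv d (Om : pt d -> Prop) : strictly_convex Om ->
  forall x y t, closure Om x -> closure Om y -> 0 <= t <= 1 -> closure Om (fun i => (1 - t) * x i + t * y i).
Proof. move=> Hsc x y t Hx Hy Ht.
 case: (classic (x = y)) => Hxy.
 { subst y. have -> : (fun i => (1 - t) * x i + t * x i) = x.
   { apply: functional_extensionality => i; ring. } done. }
 case: (Req_dec t 0) => Ht0.
 { subst t. have -> : (fun i => (1 - 0) * x i + 0 * y i) = x.
   { apply: functional_extensionality => i; ring. } done. }
 case: (Req_dec t 1) => Ht1.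
 { subst t. have -> : (fun i => (1 - 1) * x i + 1 * y i) = y.
   { apply: functional_extensionality => i; ring. } done. }
 apply: closure_self. apply: Hsc => //. lra. Qed.

Lemma node_mesh_cl d (T : list (simplex d)) x : node T x -> mesh_cl T x.
Proof. move=> [S [HS [k <-]]]. exists S; split=>//. exact: vertex_in. Qed.

Lemma node_cases d (T : list (simplex d)) x : node T x -> inode T x \/ bnode T x.
Proof. move=> Hn. case: (classic (mesh_int T x)) => H.
 - left; by split.
 - right; split=>//. split=>//. apply: closure_self. exact: node_mesh_cl. Qed.

Lemma inode_not_bnode d (T : list (simplex d)) x : inode T x -> bnode T x -> False.
Proof. move=> [_ H1] [_ [_ H2]]. exact: H2 H1. Qed.

Lemma mesh_cl_closure d (Om : pt d -> Prop) (T : list (simplex d)) :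
  strictly_convex Om -> admissible_mesh Om T -> forall y, mesh_cl T y -> closure Om y.
Proof. move=> Hsc [_ [_ [Hint Hb]]] y [S [HS Hy]].
 move/in_simplex_wts: Hy => [a [H0 [H1 H2]]].
 have -> : y = (fun i => rsum (fun k => a k * S k i)) by apply: functional_extensionality.
 apply: (conv_comb (closure_conv Hsc)) => // k.
 have Hn : node T (S k) by exists S; split=>//; exists k.
 case: (node_cases Hn) => [[_ Hi]|[_ Hbd]].
 - apply: closure_self. exact: Hint.
 - exact: (proj1 (Hb _ (conj Hn Hbd))). Qed.
Lemma det_mx d (A : mat d) : det A = (\det (\matrix_(i,j) A i j))%R.
Proof. unfold det, rsum, rprod. rewrite /determinant. apply: eq_bigr => s _.
under [in RHS]eq_bigr do rewrite mxE.
set P := (\big[_/_]_(i < d) _).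
case: (odd_perm s) => /=.
- rewrite expr1 mulN1r -RoppE. lra.
- rewrite expr0 mul1r. lra.
Qed.

Lemma inv_exists d (A : mat d) : det A <> 0 -> exists Ai : mat d,
 (forall i k, rsum (fun j => A i j * Ai j k) = if i == k then 1 else 0) /\
 (forall i k, rsum (fun j => Ai i j * A j k) = if i == k then 1 else 0).
Proof. move=> H. set M := ((\matrix_(i,j) A i j)%R : 'M[R]_d).
 have HU : M \in unitmx.
 { rewrite unitmxE unitfE -det_mx. apply/eqP. exact: H. }
 exists (fun i j => invmx M i j). split => i k.
 - have := congr1 (fun X : 'M[R]_d => X i k) (mulmxV HU). rewrite !mxE /=.
   move=> Heq. have -> : (if i == k then 1 else 0) = ((i == k)%:R)%R by case: (i == k).
   rewrite -Heq. apply: eq_bigr => j _. rewrite ?mxE. done.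
 - have := congr1 (fun X : 'M[R]_d => X i k) (mulVmx HU). rewrite !mxE /=.
   move=> Heq. have -> : (if i == k then 1 else 0) = ((i == k)%:R)%R by case: (i == k).
   rewrite -Heq. apply: eq_bigr => j _. rewrite ?mxE. done.
Qed.
Lemma lin_lip d (c z x y : pt d) :
  Rabs (rsum (fun j => (x j - z j) * c j) - rsum (fun j => (y j - z j) * c j))
   <= rsum (fun j => Rabs (c j)) * norm (psub x y).
Proof. rewrite -rsum_sub. apply: Rle_trans (rsum_abs _) _.
 rewrite Rmult_comm -rsum_scal. apply: rsum_le => j.
 have -> : (x j - z j) * c j - (y j - z j) * c j = psub x y j * c j by rewrite /psub; ring.
 rewrite Rabs_mult. have := coord_le_norm (psub x y) j. have := Rabs_pos (c j). nra. Qed.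

Lemma closed_lin d (P : pt d -> Prop) (c z : pt d) lo y :
  (forall x, P x -> lo <= rsum (fun j => (x j - z j) * c j)) -> closure P y ->
  lo <= rsum (fun j => (y j - z j) * c j).
Proof. move=> H Hy. apply: Rnot_lt_le => Hlt.
 set K := rsum (fun j => Rabs (c j)).
 have HK : 0 <= K by apply: rsum_ge0 => j; exact: Rabs_pos.
 set v := rsum (fun j => (y j - z j) * c j) in Hlt.
 have He : 0 < (lo - v) / (K + 1). { apply: Rdiv_lt_0_compat; lra. }
 have [x [Px Hxy]] := Hy _ He.
 have := H x Px. have := lin_lip c z x y. rewrite -/K -/v norm_psub_sym => Hl.
 have : K * norm (psub x y) <= K * ((lo - v) / (K + 1)).
 { apply: Rmult_le_compat_l => //. rewrite norm_psub_sym; lra. }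
 have -> : K * ((lo - v) / (K + 1)) = (lo - v) - (lo - v) / (K + 1) by field; lra.
 move: Hl; set w := rsum _. move=> Hl. have := Rle_abs (w - v). rewrite (norm_psub_sym x y). lra. Qed.

Lemma unlift_lift0 n (i : 'I_n) (F : 'I_n -> R) (g : R) :
  match unlift (ord0 : 'I_n.+1) (lift ord0 i) with Some j => F j | None => g end = F i.
Proof. by rewrite liftK. Qed.

Lemma simplex_closed d (S : simplex d) : nondeg S -> forall y, closure (in_simplex S) y -> in_simplex S y.
Proof. rewrite /nondeg. set A := (fun i j => _). move=> HA.
 have [Ai [HAi1 HAi2]] := inv_exists HA.
 set mu := fun (x : pt d) (i : 'I_d) => rsum (fun j => (x j - S ord0 j) * Ai j i).
 have Ha : forall x a, wts S a x -> forall i, mu x i = a (lift ord0 i).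
 { move=> x a [H0 [H1 H2]] i.
   have Hx : forall j, x j - S ord0 j = rsum (fun i' => a (lift ord0 i') * A i' j).
   { move=> j. rewrite H2 rsum_recl in H1 *. rewrite rsum_recl.
     rewrite /A. rewrite (rsum_ext (G := fun i' => a (lift ord0 i') * S (lift ord0 i') j - S ord0 j * a (lift ord0 i'))); last by move=> i'; ring.
     rewrite rsum_sub rsum_scal. simpl. have -> : a ord0 = 1 - rsum (fun i0 : 'I_d => a (lift ord0 i0)) by lra. ring. }
   rewrite /mu. rewrite (rsum_ext (G := fun j => rsum (fun i' => a (lift ord0 i') * (A i' j * Ai j i)))); last first.
   { move=> j. rewrite Hx. rewrite Rmult_comm -rsum_scal. apply: rsum_ext => i'. ring. }
   rewrite rsum_exch.
   rewrite (rsum_ext (G := fun i' => if i' == i then a (lift ord0 i') else 0)).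
   - exact: rsum_pred1.
   - move=> i'. rewrite rsum_scal HAi1. case: (i' == i); ring. }
 have Hb : forall x j, x j = S ord0 j + rsum (fun i => mu x i * A i j).
 { move=> x j. rewrite /mu.
   rewrite (rsum_ext (G := fun i => rsum (fun j' => (x j' - S ord0 j') * (Ai j' i * A i j)))); last first.
   { move=> i. rewrite Rmult_comm -rsum_scal. apply: rsum_ext => j'. ring. }
   rewrite rsum_exch.
   rewrite (rsum_ext (G := fun j' => if j' == j then x j' - S ord0 j' else 0)).
   - rewrite rsum_pred1. ring.
   - move=> j'. rewrite rsum_scal HAi2. case: (j' == j); ring. }
 move=> y Hy.
 have Hpos : forall i, 0 <= mu y i.
 { move=> i. apply: (closed_lin (c := fun j => Ai j i) (z := S ord0) (P := in_simplex S)) Hy.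
   move=> x /in_simplex_wts [a Hw]. have := Ha x a Hw i. rewrite /mu => ->. exact: (proj1 Hw). }
 have Hsum : rsum (mu y) <= 1.
 { have Hs : forall x, rsum (mu x) = - rsum (fun j => (x j - S ord0 j) * - rsum (fun i => Ai j i)).
   { move=> x. rewrite -rsum_opp /mu rsum_exch. apply: rsum_ext => j. 
     rewrite Ropp_mult_distr_r Ropp_involutive -rsum_scal. done. }
   rewrite Hs. suff : -1 <= rsum (fun j => (y j - S ord0 j) * - rsum (fun i => Ai j i)) by lra.
   apply: (closed_lin (P := in_simplex S)) Hy.
   move=> x /in_simplex_wts [a Hw]. 
   have : rsum (mu x) = rsum (fun i => a (lift ord0 i)) by apply: rsum_ext => i; exact: Ha.
   rewrite Hs. move: Hw => [H0 [H1 _]]. rewrite rsum_recl in H1. have := H0 ord0. simpl in *. lra. }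
 apply/in_simplex_wts.
 exists (fun k => match unlift ord0 k with Some i => mu y i | None => 1 - rsum (mu y) end).
 split; [|split].
 - move=> k. case: (unlift ord0 k) => [i|]; [exact: Hpos | lra].
 - rewrite rsum_recl unlift_none. rewrite (rsum_ext (G := mu y)); first by ring.
   move=> i. exact: unlift_lift0.
 - move=> j. rewrite rsum_recl unlift_none. rewrite [X in _ = _ + X](rsum_ext (G := fun i => mu y i * S (lift ord0 i) j)); last first.
   { move=> i. apply: Rmult_eq_compat_r. exact: unlift_lift0. }
   rewrite {1}(Hb y j) /A. rewrite (rsum_ext (F := fun i => mu y i * _) (G := fun i => mu y i * S (lift ord0 i) j - S ord0 j * mu y i)); last by move=> i; ring.
   rewrite rsum_sub rsum_scal. ring.
Qed.
Lemma mesh_closed d (T : list (simplex d)) : (forall S, In S T -> nondeg S) ->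
  forall y, closure (mesh_cl T) y -> mesh_cl T y.
Proof. elim: T => [|S T IH] Hnd y Hy.
 - have [z [[S [HS _]] _]] := Hy 1 Rlt_0_1. done.
 - case: (classic (closure (in_simplex S) y)) => HS.
   + exists S. split; first by left. apply: simplex_closed => //. apply: Hnd; by left.
   + have [e1 He1] := not_all_ex_not _ _ HS.
     have [He1p Hfar] : 0 < e1 /\ forall z, in_simplex S z -> e1 <= norm (psub y z).
     { case: (classic (0 < e1)) => Hp; last first.
       { exfalso; apply: He1 => Hq. exfalso. exact: Hp Hq. }
       split=>// z Hz. apply: Rnot_lt_le => Hlt. apply: He1 => _. by exists z. }
     have Hc : closure (mesh_cl T) y.
     { move=> e He. have Hm : 0 < Rmin e e1 by apply: Rmin_pos.
       have [z [[S' [HS' Hz]] Hn]] := Hy _ Hm.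
       case: HS' => [E|HS'].
       - subst S'. have := Hfar z Hz. have := Rmin_r e e1. lra.
       - exists z. split; first by exists S'. have := Rmin_l e e1. lra. }
     have [S' [HS' Hz]] := IH (fun S0 H => Hnd S0 (or_intror H)) y Hc.
     exists S'. split=>//. by right. Qed.
Lemma In_of_mem (T : eqType) (x : T) (s : seq T) : x \in s -> In x s.
Proof. elim: s => [|a s IH] //=. rewrite in_cons => /orP [/eqP ->|H]; [by left|right; exact: IH]. Qed.

Lemma nodes_list d (T : list (simplex d)) : exists N : list (pt d), forall x, node T x <-> In x N.
Proof. exists (flat_map (fun S => List.map S (enum 'I_d.+1)) T) => x. rewrite in_flat_map. split.
 - move=> [S [HS [k <-]]]. exists S; split=>//. apply/in_map_iff. exists k; split=>//.
   apply: In_of_mem. by rewrite mem_enum.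
 - move=> [S [HS /in_map_iff [k [<- _]]]]. exists S; split=>//. by exists k. Qed.

Lemma select d (N : list (pt d)) (W phi : pt d -> R) : N <> nil -> exists x, In x N /\
  (forall y, In y N -> W x <= W y) /\ (forall y, In y N -> W y = W x -> phi y <= phi x).
Proof. elim: N => [|a l IH] // _. case: l IH => [|b l] IH.
 - exists a. split; first by left. split => y [<-|[]]; lra.
 - have [x [Hx [H1 H2]]] := IH ltac:(done).
   case: (total_order_T (W a) (W x)) => [[Hlt|Heq]|Hgt].
   + exists a. split; first by left. split.
     * move=> y [<-|Hy]; [lra|]. have := H1 y Hy. lra.
     * move=> y [<-|Hy]; [lra|]. have := H1 y Hy. lra.
   + case: (Rle_dec (phi a) (phi x)) => Hp.
     * exists x. split; first by right. split.
       -- move=> y [<-|Hy]; [lra|exact: H1].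
       -- move=> y [<-|Hy] E; [lra|exact: H2].
     * exists a. split; first by left. split.
       -- move=> y [<-|Hy]; [lra|]. have := H1 y Hy. lra.
       -- move=> y [<-|Hy] E; [lra|]. have := H2 y Hy ltac:(lra). lra.
   + exists x. split; first by right. split.
     * move=> y [<-|Hy]; [lra|exact: H1].
     * move=> y [<-|Hy] E; [lra|exact: H2]. Qed.

Lemma Kexists d (N : list (pt d)) (W phi : pt d -> R) m Phi :
  (forall y, In y N -> m <= W y) -> (forall y, In y N -> W y = m -> phi y <= Phi) ->
  exists K, 0 <= K /\ forall y, In y N -> phi y - Phi <= K * (W y - m).
Proof. elim: N => [|a l IH] H1 H2.
 - exists 0. split; [lra| move=> y []].
 - have [K [HK HKl]] := IH (fun y Hy => H1 y (or_intror Hy)) (fun y Hy => H2 y (or_intror Hy)).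
   have Ha1 := H1 a (or_introl erefl).
   case: (Req_dec (W a) m) => Ha.
   + exists K. split=>//. move=> y [<-|Hy]; last exact: HKl.
     have := H2 a (or_introl erefl) Ha. rewrite Ha. nra.
   + set Ka := (phi a - Phi) / (W a - m).
     exists (Rmax K Ka). split; first by apply: Rle_trans HK (Rmax_l _ _).
     move=> y [<-|Hy].
     * have : phi a - Phi = Ka * (W a - m) by rewrite /Ka; field; lra.
       have := Rmax_r K Ka. nra.
     * have := HKl y Hy. have := H1 y (or_intror Hy). have := Rmax_l K Ka. nra. Qed.
Definition Delta d (sig : mat d -> mat d) (lam : mat d -> pt d) (k : pt d -> R) (W : pt d -> R) (B : mat d) (x : pt d) :=
 rsum (fun j => lam B j * (W (fun i => x i - k x * sig B i j) - 2 * W x + W (fun i => x i + k x * sig B i j)) / (k x ^ 2)).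

Lemma trace_id d (s : mat d) (l : pt d) : tr (ctrl_mat s l) = rsum (fun j => l j * nsq (fun i => s i j)).
Proof. rewrite /tr /ctrl_mat /nsq /dot rsum_exch. apply: rsum_ext => j. rewrite -rsum_scal.
 apply: rsum_ext => i. ring. Qed.

Lemma Delta_quad d sig lam (k : pt d -> R) (B : mat d) x c p :
  0 < k x -> tr (ctrl_mat (sig B) (lam B)) = 1 ->
  Delta sig lam k (fun y => c * nsq (psub y p)) B x = 2 * c.
Proof. move=> Hk Htr. rewrite trace_id in Htr. rewrite /Delta.
 rewrite (rsum_ext (G := fun j => (2 * c) * (lam B j * nsq (fun i => sig B i j)))).
 - rewrite rsum_scal Htr. ring.
 - move=> j. 
   have E := second_diff x (fun i => k x * sig B i j) p.
   have E2 : nsq (fun i => k x * sig B i j) = k x ^ 2 * nsq (fun i => sig B i j).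
   { rewrite /nsq /dot -rsum_scal. apply: rsum_ext => i. ring. }
   have -> : c * nsq (psub (fun i => x i - k x * sig B i j) p) - 2 * (c * nsq (psub x p)) +
      c * nsq (psub (fun i => x i + k x * sig B i j) p) = c * (2 * nsq (fun i => k x * sig B i j)) by rewrite -E; ring.
   rewrite E2. field. lra. Qed.

Lemma core d (T : list (simplex d)) (W : pt d -> R) (k : pt d -> R) sig lam :
 (exists x, node T x) ->
 (forall S, In S T -> forall y a, wts S a y -> rsum (fun k => a k * W (S k)) <= W y) ->
 (forall B, S1 B -> (forall j, 0 <= lam B j) /\ ctrl_mat (sig B) (lam B) = B) ->
 (forall x, inode T x -> 0 < k x /\ forall B, S1 B -> forall j,
     mesh_cl T (fun i => x i - k x * sig B i j) /\ mesh_cl T (fun i => x i + k x * sig B i j)) ->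
 (forall x, inode T x -> forall eps, 0 < eps -> exists B, S1 B /\ Delta sig lam k W B x < eps) ->
 exists z, bnode T z /\ forall y, mesh_cl T y -> W z <= W y.
Proof. move=> [x0 Hx0] HW Hctrl Hst Happ.
 have [N HN] := nodes_list T.
 set phi := fun y : pt d => 1 * nsq (psub y (fun _ => 0)).
 have HNn : N <> nil. { move=> E. have := proj1 (HN x0) Hx0. by rewrite E. }
 have [x [HxN [Hmin Hmax]]] := select W phi HNn.
 have [K [HK HKb]] := Kexists (m := W x) (Phi := phi x) (fun y Hy => Hmin y Hy) (fun y Hy E => Hmax y Hy E).
 have Hext : forall y, mesh_cl T y -> W x <= W y /\ phi y - phi x <= K * (W y - W x).
 { move=> y [S [HS Hy]]. move/in_simplex_wts: Hy => [a Ha].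
   have Hle := HW S HS y a Ha. have Hj := jensen (fun _ => 0) Ha.
   move: Ha => [H0 [H1 H2]].
   have HSk : forall k, In (S k) N. { move=> k0. apply/HN. exists S; split=>//; by exists k0. }
   have Hm : W x <= rsum (fun k => a k * W (S k)).
   { have -> : W x = W x * rsum a by rewrite H1; ring. rewrite -rsum_scal. apply: rsum_le => k0. 
     have := Hmin _ (HSk k0). have := H0 k0. nra. }
   split; first lra.
   have : rsum (fun k => a k * nsq (psub (S k) (fun _ => 0))) - phi x
          <= K * (rsum (fun k => a k * W (S k)) - W x).
   { have -> : rsum (fun k => a k * nsq (psub (S k) (fun _ => 0))) - phi x
              = rsum (fun k => a k * (phi (S k) - phi x)).
     { rewrite [in RHS](rsum_ext (G := fun k => a k * nsq (psub (S k) (fun _ => 0)) + (- phi x) * a k)); last by move=> k0; rewrite /phi; ring.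
       rewrite rsum_add rsum_scal H1. ring. }
     have -> : K * (rsum (fun k => a k * W (S k)) - W x) = rsum (fun k => a k * (K * (W (S k) - W x))).
     { rewrite [in RHS](rsum_ext (G := fun k => K * (a k * W (S k)) + (- K * W x) * a k)); last by move=> k0; ring.
       rewrite rsum_add rsum_scal rsum_scal H1. ring. }
     apply: rsum_le => k0. have := HKb _ (HSk k0). have := H0 k0. nra. }
   rewrite /phi in Hj *. nra. }
 exists x. have Hxn : node T x by apply/HN.
 case: (node_cases Hxn) => [Hi|Hb]; last first.
 { split=>// y Hy. exact: (proj1 (Hext y Hy)). }
 exfalso.
 have [Hk Hsten] := Hst x Hi.
 have [B [HB HD]] := Happ x Hi (/ (K + 1)) ltac:(apply: Rinv_0_lt_compat; lra).
 have [Hlam Hcm] := Hctrl B HB.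
 have Htr : tr (ctrl_mat (sig B) (lam B)) = 1 by rewrite Hcm; exact: (proj2 HB).
 have Hphi := @Delta_quad d sig lam k B x 1 (fun _ => 0) Hk Htr.
 have Hk2 : 0 < k x ^ 2 by apply: pow_lt.
 have HD0 : 0 <= Delta sig lam k W B x.
 { apply: rsum_ge0 => j. have [Hm Hp] := Hsten B HB j.
   have := proj1 (Hext _ Hm). have := proj1 (Hext _ Hp). have := Hlam j.
   move=> H1 H2 H3. rewrite /Rdiv. apply: Rmult_le_pos; last by apply: Rlt_le; apply: Rinv_0_lt_compat.
   nra. }
 have : Delta sig lam k phi B x <= K * Delta sig lam k W B x.
 { rewrite /Delta -rsum_scal. apply: rsum_le => j. have [Hm Hp] := Hsten B HB j.
   have := proj2 (Hext _ Hm). have := proj2 (Hext _ Hp). have := Hlam j.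
   move=> H1 H2 H3. rewrite /Rdiv. 
   have Hi2 : 0 < / k x ^ 2 by apply: Rinv_0_lt_compat.
   set a1 := phi _ in H3 *. set a2 := phi _ in H2 *. set w1 := W _ in H3 *. set w2 := W _ in H2 *.
   have : lam B j * (a1 - 2 * phi x + a2) <= K * (lam B j * (w1 - 2 * W x + w2)) by nra.
   move=> Hq. have := Rmult_le_compat_r _ _ _ (Rlt_le _ _ Hi2) Hq. 
   have -> : phi x = 1 * nsq (psub x (fun _ => 0)) by []. rewrite /a1 /a2. nra. }
 rewrite /phi Hphi. 
 have : K * Delta sig lam k W B x <= K * / (K + 1) by apply: Rmult_le_compat_l => //; lra.
 have : K * / (K + 1) < 1. { apply: (Rmult_lt_reg_r (K + 1)); first lra. field_simplify; lra. }
 lra. Qed.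
Lemma nroot_ge0 d x : 0 <= nroot d x.
Proof. rewrite /nroot. destruct (Rle_dec x 0) as [Hx|Hx]; simpl; [lra|]. rewrite /Rpower. apply: Rlt_le; exact: exp_pos. Qed.

Lemma nroot_le d x : (1 <= d)%N -> nroot d x <= 1 + Rabs x.
Proof. move=> Hd. rewrite /nroot. destruct (Rle_dec x 0) as [Hx|Hx]; simpl; first by have := Rabs_pos x; lra.
 have Hd' : 1 <= INR d by apply: (le_INR 1); apply/leP.
 have Hinv : 0 <= / INR d <= 1.
 { split. apply: Rlt_le; apply: Rinv_0_lt_compat; lra.
   rewrite -Rinv_1. apply: Rinv_le_contravar; lra. }
 rewrite Rabs_right; last lra.
 case: (Rle_dec x 1) => H1.
 - have Hx0 : 0 < x by lra. have := Rle_Rpower_l x 1 (/ INR d) (proj1 Hinv) (conj Hx0 H1).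
   have -> : Rpower 1 (/ INR d) = 1 by rewrite /Rpower ln_1 Rmult_0_r exp_0.
   lra.
 - have Hx1 : 1 <= x by lra. have := Rle_Rpower x (/ INR d) 1 Hx1 (proj2 Hinv). rewrite Rpower_1; lra. Qed.

Definition ev {d} (p : 'I_d) : pt d := fun i => if i == p then 1 else 0.

Lemma qform_ev d (B : mat d) a b s :
  rsum (fun i => rsum (fun j => (ev a i + s * ev b i) * B i j * (ev a j + s * ev b j)))
  = B a a + s * B a b + s * (B b a + s * B b b).
Proof.
 rewrite (rsum_ext (G := fun i => (ev a i + s * ev b i) * (B i a + s * B i b))).
 - rewrite (rsum_ext (G := fun i => ev a i * (B i a + s * B i b) + s * (ev b i * (B i a + s * B i b)))); last by move=> i; ring.
   rewrite rsum_add rsum_scal /ev. rewrite (rsum_ext (F := fun i => (if i == a then 1 else 0) * _) (G := fun i => if i == a then B i a + s * B i b else 0)); last by move=> i; case: (i == a); ring.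
   rewrite rsum_pred1. rewrite (rsum_ext (F := fun i => (if i == b then 1 else 0) * _) (G := fun i => if i == b then B i a + s * B i b else 0)); last by move=> i; case: (i == b); ring.
   rewrite rsum_pred1. done.
 - move=> i. rewrite (rsum_ext (G := fun j => (ev a i + s * ev b i) * (ev a j * B i j) + ((ev a i + s * ev b i) * s) * (ev b j * B i j))); last by move=> j; ring.
   rewrite rsum_add !rsum_scal /ev.
   rewrite (rsum_ext (F := fun j => (if j == a then 1 else 0) * _) (G := fun j => if j == a then B i j else 0)); last by move=> j; case: (j == a); ring.
   rewrite rsum_pred1.
   rewrite (rsum_ext (F := fun j => (if j == b then 1 else 0) * _) (G := fun j => if j == b then B i j else 0)); last by move=> j; case: (j == b); ring.
   rewrite rsum_pred1. ring. Qed.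

Lemma S1_entries d (B : mat d) : S1 B -> forall a b, Rabs (B a b) <= 1.
Proof. move=> [[Hsym Hpsd] Htr].
 have Hq : forall a b s, 0 <= B a a + s * B a b + s * (B b a + s * B b b).
 { move=> a b s. rewrite -qform_ev. exact: (Hpsd (fun i => ev a i + s * ev b i)). }
 have Hdiag : forall a, 0 <= B a a. { move=> a. have := Hq a a 0. lra. }
 have Hdle : forall a, B a a <= 1. { move=> a. rewrite -Htr /tr. exact: (rsum_term (F := fun i => B i i)). }
 move=> a b. have := Hq a b 1. have := Hq a b (-1). rewrite (Hsym b a).
 have := Hdiag a. have := Hdiag b. have := Hdle a. have := Hdle b.
 move=> *. apply: Rabs_le. lra. Qed.

Lemma det_bound d (A : mat d) : (forall i j, Rabs (A i j) <= 1) -> Rabs (det A) <= INR #|{perm 'I_d}|.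
Proof. move=> H. rewrite /det. apply: Rle_trans (rsum_abs _) _.
 rewrite -[INR _]Rmult_1_r -rsum_const. apply: rsum_le => s.
 rewrite Rabs_mult. have -> : Rabs (if odd_perm s then -1 else 1) = 1 by case: (odd_perm s); rewrite ?Rabs_Ropp Rabs_R1.
 rewrite Rmult_1_l /rprod. apply: (big_ind (fun p => Rabs p <= 1)).
 - rewrite Rabs_R1; lra.
 - move=> x y Hx Hy. rewrite Rabs_mult. have := Rabs_pos x. have := Rabs_pos y. nra.
 - move=> i _. exact: H. Qed.

Lemma B0_S1 d : (1 <= d)%N -> S1 (fun i j : 'I_d => if i == j then / INR d else 0).
Proof. move=> Hd. have Hd' : 0 < INR d by apply: (lt_INR 0); apply/ltP.
 split; [split|].
 - move=> i j. by rewrite eq_sym.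
 - move=> v. rewrite (rsum_ext (G := fun i => / INR d * (v i * v i))).
   + rewrite rsum_scal. apply: Rmult_le_pos; [apply: Rlt_le; exact: Rinv_0_lt_compat|].
     apply: rsum_ge0 => i. nra.
   + move=> i. rewrite (rsum_ext (G := fun j => if i == j then v i * / INR d * v j else 0)).
     * rewrite rsum_pred1'. ring.
     * move=> j; case: (i == j); ring.
 - rewrite /tr. rewrite (rsum_ext (G := fun _ => / INR d)); last by move=> i; rewrite eqxx.
   rewrite rsum_const card_ord. field. lra. Qed.
Lemma Delta_lin d sig lam (k : pt d -> R) (W1 W2 : pt d -> R) a b B x :
 Delta sig lam k (fun y => a * W1 y + b * W2 y) B x = a * Delta sig lam k W1 B x + b * Delta sig lam k W2 B x.
Proof. rewrite /Delta -!rsum_scal -rsum_add. apply: rsum_ext => j. rewrite /Rdiv. ring. Qed.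

Lemma Delta_ext d sig lam (k : pt d -> R) (P : pt d -> Prop) (W1 W2 : pt d -> R) B x :
 (forall y, P y -> W1 y = W2 y) -> P x ->
 (forall j, P (fun i => x i - k x * sig B i j) /\ P (fun i => x i + k x * sig B i j)) ->
 Delta sig lam k W1 B x = Delta sig lam k W2 B x.
Proof. move=> H Hx Hs. apply: rsum_ext => j. have [H1 H2] := Hs j.
 rewrite (H _ Hx) (H _ H1) (H _ H2). done. Qed.

Lemma Hh_bnode d (f g : pt d -> R) sig lam T k s phi x :
  bnode T x -> (exists B : mat d, S1 B) -> Hh_zero f g sig lam T k s phi x -> s = g x.
Proof. move=> Hb [B0 HB0] [Hub Hl].
 have HP : forall r, (exists B : mat d, S1 B /\ LhB f g sig lam T k B s phi x r) -> r = s - g x.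
 { move=> r [B [_ [[Hi _]|[_ ->]]]] //. exfalso. exact: inode_not_bnode Hi Hb. }
 have H1 : s - g x <= 0. { apply: Hub. exists B0. split=>//. right. by split. }
 have H2 : 0 <= s - g x. { apply: Hl => r Hr. rewrite (HP r Hr). lra. }
 lra. Qed.

Lemma Hh_inode d (f g : pt d -> R) sig lam T k phi x :
  inode T x -> Hh_zero f g sig lam T k (phi x) phi x ->
  (forall B, S1 B -> f x * nroot d (det B) <= Delta sig lam k phi B x) /\
  (forall eps, 0 < eps -> exists B, S1 B /\ Delta sig lam k phi B x < f x * nroot d (det B) + eps).
Proof. move=> Hi [Hub Hl]. split.
 - move=> B HB. have : - Delta sig lam k phi B x + f x * nroot d (det B) <= 0.
   { apply: Hub. exists B. split=>//. left. split=>//. }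
   lra.
 - move=> eps He. apply: NNPP => Hno.
   have : 0 <= - eps.
   { apply: Hl => r [B [HB [[_ ->]|[Hb _]]]].
     + apply: Rnot_lt_le => Hlt. apply: Hno. exists B. split=>//.
       rewrite /Delta. lra.
     + exfalso. exact: inode_not_bnode Hi Hb. }
   lra. Qed.
Lemma setup d (Om : pt d -> Prop) (F : mat d -> pt d -> Prop) sig lam T (k : pt d -> R) e :
 strictly_convex Om -> (exists x, Om x) ->
 (forall B, S1 B -> F (sig B) (lam B) /\ ctrl_mat (sig B) (lam B) = B) ->
 admissible_mesh Om T -> stencil_ok F T k -> valid_ext Om T e ->
 [/\ (exists x, node T x),
     (forall y, mesh_cl T y -> e y = y),
     (forall x, closure Om x -> mesh_cl T (e x)),
     (forall x, inode T x -> 0 < k x /\ forall B, S1 B -> forall j,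
         mesh_cl T (fun i => x i - k x * sig B i j) /\ mesh_cl T (fun i => x i + k x * sig B i j)) &
     (forall x, inode T x -> Om x)].
Proof. move=> Hsc [x0 Hx0] Hctrl Hadm Hst Hve.
 have Hx0c : closure Om x0 by exact: closure_self.
 have HmOm := mesh_cl_closure Hsc Hadm.
 have Hey : forall y, mesh_cl T y -> e y = y. { move=> y Hy. exact: (proj1 (Hve y (HmOm y Hy)) Hy). }
 have Hcl : forall x, closure Om x -> mesh_cl T (e x).
 { move=> x Hx. case: (classic (mesh_cl T x)) => Hm.
   - by rewrite (proj1 (Hve x Hx) Hm).
   - have [[Hc _] _] := proj2 (Hve x Hx) Hm. apply: mesh_closed => //. exact: (proj1 Hadm). }
 split => //.
 - have [S [HS _]] := Hcl x0 Hx0c. exists (S ord0). exists S. split=>//. by exists ord0.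
 - move=> x [_ Hi]. have [Hk Hs] := Hst x Hi. split=>// B HB j.
   exact: Hs (proj1 (Hctrl B HB)).
 - move=> x [_ Hi]. exact: (proj1 (proj2 (proj2 Hadm)) x Hi). Qed.

Lemma Vh_aff d (T : list (simplex d)) u : Vh T u ->
  forall S, In S T -> forall y a, wts S a y -> u y = rsum (fun k => a k * u (S k)).
Proof. move=> HV S HS y a Ha. have [c [b Hb]] := HV S HS. exact: affine_comb Hb Ha. Qed.

Lemma Delta_le d sig lam (k : pt d -> R) (P : pt d -> Prop) (z v : pt d -> R) B x :
  (forall y, P y -> z y <= v y) -> v x = z x ->
  (forall j, P (fun i => x i - k x * sig B i j) /\ P (fun i => x i + k x * sig B i j)) ->
  (forall j, 0 <= lam B j) -> 0 < k x ->
  Delta sig lam k z B x <= Delta sig lam k v B x.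
Proof. move=> H Hx Hs Hl Hk. apply: rsum_le => j. have [H1 H2] := Hs j.
 have := H _ H1. have := H _ H2. have := Hl j. rewrite Hx. move=> *.
 rewrite /Rdiv. apply: Rmult_le_compat_r. apply: Rlt_le; apply: Rinv_0_lt_compat; exact: pow_lt.
 nra. Qed.
Lemma part2 d (Om : pt d -> Prop) (f g : pt d -> R) (F : mat d -> pt d -> Prop) (C0 : R) sig lam :
  (1 <= d)%N -> (exists x, Om x) -> strictly_convex Om -> (forall x, Om x -> 0 <= f x) ->
  (forall B, S1 B -> F (sig B) (lam B) /\ ctrl_mat (sig B) (lam B) = B) ->
  (forall s l, F s l -> (forall j, 0 <= l j) /\ vsum l = C0) ->
  (forall (p : pt d) (M : R),
     (forall x (B : mat d), Om x -> S1 B -> Rabs (f x) * nroot d (det B) <= M) ->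
     forall (T : list (simplex d)) (k : pt d -> R) (e : pt d -> pt d) (u v : pt d -> R),
       admissible_mesh Om T -> stencil_ok F T k ->
       valid_ext Om T e -> solves f g sig lam T k e u ->
       interp T (fun x => M / 2 * (norm (psub x p)) ^ 2) v ->
       (exists z, bnode T z /\
          forall x, closure Om x -> u z - v z <= u (e x) - v (e x)) /\
       (exists z, bnode T z /\
          forall x, closure Om x -> u (e x) + v (e x) <= u z + v z)).
Proof. move=> Hd HOm Hsc Hf0 Hctrl Hlam p M HM T k e u v Hadm Hst Hve [HVu Hsol] [HVv Hvn].
 have [Hnode Hey Hcl Hsten HOmi] := setup Hsc HOm Hctrl Hadm Hst Hve.
 have Hctrl' : forall B, S1 B -> (forall j, 0 <= lam B j) /\ ctrl_mat (sig B) (lam B) = B.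
 { move=> B HB. have [HF Hc] := Hctrl B HB. split=>//. exact: (proj1 (Hlam _ _ HF)). }
 have HB0 := B0_S1 Hd.
 have HM0 : 0 <= M.
 { have [x0 Hx0] := HOm. have := HM x0 _ Hx0 HB0. have := Rabs_pos (f x0).
   have := nroot_ge0 d (det (fun i j : 'I_d => if i == j then / INR d else 0)). nra. }
 set z := fun y => M / 2 * nsq (psub y p).
 have Hvn' : forall x, node T x -> v x = z x.
 { move=> x Hx. rewrite Hvn // /z norm2. done. }
 have Hua := Vh_aff HVu. have Hva := Vh_aff HVv.
 have Hvz : forall y, mesh_cl T y -> z y <= v y.
 { move=> y [S [HS Hy]]. move/in_simplex_wts: Hy => [a Ha].
   rewrite (Hva S HS y a Ha). 
   rewrite (rsum_ext (G := fun k => M / 2 * (a k * nsq (psub (S k) p)))); last first.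
   { move=> k0. rewrite Hvn'; last by exists S; split=>//; exists k0. rewrite /z. ring. }
   rewrite rsum_scal /z. apply: Rmult_le_compat_l; first lra. exact: jensen. }
 have Hinode : forall x, inode T x ->
   (forall B, S1 B -> f x * nroot d (det B) <= Delta sig lam k (fun y => u (e y)) B x) /\
   (forall eps, 0 < eps -> exists B, S1 B /\ Delta sig lam k (fun y => u (e y)) B x < f x * nroot d (det B) + eps).
 { move=> x Hi. apply: (Hh_inode (g := g) (T := T)) => //.
   have Hx : mesh_cl T x by apply: node_mesh_cl; exact: (proj1 Hi).
   have := Hsol x (proj1 Hi). by rewrite -{1}(Hey x Hx). }
 have HDv : forall x B, inode T x -> S1 B -> M <= Delta sig lam k v B x.
 { move=> x B Hi HB. have [Hk Hs] := Hsten x Hi. have [Hl Hc] := Hctrl' B HB.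
   have Htr : tr (ctrl_mat (sig B) (lam B)) = 1 by rewrite Hc; exact: (proj2 HB).
   have := @Delta_quad d sig lam k B x (M / 2) p Hk Htr.
   have := Delta_le Hvz (Hvn' x (proj1 Hi)) (Hs B HB) Hl Hk.
   rewrite /z. lra. }
 have HDu : forall x B W1 a b, inode T x -> S1 B ->
    Delta sig lam k (fun y => a * u y + b * W1 y) B x = a * Delta sig lam k (fun y => u (e y)) B x + b * Delta sig lam k W1 B x.
 { move=> x B W1 a b Hi HB. rewrite -Delta_lin. apply: (@Delta_ext _ _ _ _ (mesh_cl T)).
   - move=> y Hy. by rewrite (Hey y Hy).
   - apply: node_mesh_cl; exact: (proj1 Hi).
   - exact: (proj2 (Hsten x Hi) B HB). }
 split.
 - have [zz [Hzb Hzmin]] := @core d T (fun y => 1 * u y + (-1) * v y) k sig lam Hnode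
     ltac:(move=> S HS y a Ha; cbv beta; rewrite (Hua S HS y a Ha) (Hva S HS y a Ha) -!rsum_scal -rsum_add; apply: Req_le; apply: rsum_ext => k0; ring)
     Hctrl' Hsten
     ltac:(move=> x Hi eps He; have [B [HB HBd]] := (proj2 (Hinode x Hi)) eps He;
           exists B; split=>//; rewrite HDu //; have := HDv x B Hi HB;
           have := HM x B (HOmi x Hi) HB; have := Rle_abs (f x); have := nroot_ge0 d (det B);
           move=> *; nra).
   exists zz. split=>// x Hx. have := Hzmin _ (Hcl x Hx). lra.
 - have [B0 HB0'] : exists B : mat d, S1 B by eexists; exact: HB0.
   have [zz [Hzb Hzmin]] := @core d T (fun y => (-1) * u y + (-1) * v y) k sig lam Hnode
     ltac:(move=> S HS y a Ha; cbv beta; rewrite (Hua S HS y a Ha) (Hva S HS y a Ha) -!rsum_scal -rsum_add; apply: Req_le; apply: rsum_ext => k0; ring)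
     Hctrl' Hsten
     ltac:(move=> x Hi eps He; exists B0; split=>//; rewrite HDu //; have := HDv x B0 Hi HB0';
           have := (proj1 (Hinode x Hi)) B0 HB0'; have := Hf0 x (HOmi x Hi); have := nroot_ge0 d (det B0);
           move=> *; nra).
   exists zz. split=>// x Hx. have := Hzmin _ (Hcl x Hx). lra.
Qed.
Lemma closure_bound d (Om : pt d -> Prop) Rb : (forall x, Om x -> norm x <= Rb) ->
  forall z, closure Om z -> nsq (psub z (fun _ => 0)) <= INR d * (Rb + 1) ^ 2.
Proof. move=> HRb z Hz. have [x [Hx Hn]] := Hz 1 Rlt_0_1.
 have -> : INR d * (Rb + 1) ^ 2 = INR #|'I_d| * (Rb + 1) ^ 2 by rewrite card_ord.
 rewrite -rsum_const. apply: rsum_le => i.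
 have H1 := coord_le_norm x i. have H2 := coord_le_norm (psub z x) i. have := HRb x Hx.
 have H2' : Rabs (z i - x i) <= norm (psub z x) by exact: H2.
 move=> H3. rewrite /psub.
 have : Rabs (z i) < Rb + 1.
 { have := Rabs_triang (x i) (z i - x i). have -> : x i + (z i - x i) = z i by ring. lra. }
 move/Rabs_def2 => [Ha Hb]. nra. Qed.

Lemma part1 d (Om : pt d -> Prop) (f g : pt d -> R) (F : mat d -> pt d -> Prop) (C0 : R) sig lam :
  (1 <= d)%N -> (exists x, Om x) -> bounded_set Om -> strictly_convex Om ->
  (forall x, Om x -> 0 <= f x) -> bounded_on Om f -> bounded_on (bdry Om) g ->
  (forall B, S1 B -> F (sig B) (lam B) /\ ctrl_mat (sig B) (lam B) = B) ->
  (forall s l, F s l -> (forall j, 0 <= l j) /\ vsum l = C0) ->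
  (forall kappa : R, exists C, 0 < C /\
     forall (T : list (simplex d)) (k : pt d -> R) (e : pt d -> pt d) (u : pt d -> R),
       admissible_mesh Om T -> shape_reg kappa T -> stencil_ok F T k ->
       valid_ext Om T e -> solves f g sig lam T k e u ->
       forall x, closure Om x -> Rabs (u (e x)) <= C).
Proof. move=> Hd HOm [Rb HRb] Hsc Hf0 [Fb HFb] [Gb HGb] Hctrl Hlam kappa.
 set Nb := 1 + INR #|{perm 'I_d}|.
 have HNb : 1 <= Nb by have := pos_INR #|{perm 'I_d}|; rewrite /Nb; lra.
 set M := Rabs Fb * Nb.
 have HM0 : 0 <= M by have := Rabs_pos Fb; rewrite /M; nra.
 set c := M / 2.
 set Zb := INR d * (Rb + 1) ^ 2.
 have HZb : 0 <= Zb by apply: Rmult_le_pos; [exact: pos_INR| apply: pow2_ge_0].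
 have HMf : forall (x : pt d) (B : mat d), Om x -> S1 B -> f x * nroot d (det B) <= M.
 { move=> x B Hx HB. have := nroot_le (det B) Hd. have := det_bound (S1_entries HB).
   have := nroot_ge0 d (det B). have := HFb x Hx. have := Rle_abs Fb. have := Hf0 x Hx.
   rewrite /M /Nb => *. have Hfx : f x <= Rabs Fb by have := Rle_abs (f x); lra.
   apply: Rmult_le_compat => //; lra. }
 exists (Rabs Gb + c * Zb + 1). split.
 { have := Rabs_pos Gb. have : 0 <= c * Zb by apply: Rmult_le_pos => //; rewrite /c; lra. lra. }
 move=> T k e u Hadm _ Hst Hve [HVu Hsol] x Hx.
 have [Hnode Hey Hcl Hsten HOmi] := setup Hsc HOm Hctrl Hadm Hst Hve.
 have Hctrl' : forall B, S1 B -> (forall j, 0 <= lam B j) /\ ctrl_mat (sig B) (lam B) = B.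
 { move=> B HB. have [HF Hc] := Hctrl B HB. split=>//. exact: (proj1 (Hlam _ _ HF)). }
 have HB0 := B0_S1 Hd.
 have [B0 HB0'] : exists B : mat d, S1 B by eexists; exact: HB0.
 have Hua := Vh_aff HVu.
 have Hinode : forall x, inode T x ->
   (forall B, S1 B -> f x * nroot d (det B) <= Delta sig lam k (fun y => u (e y)) B x) /\
   (forall eps, 0 < eps -> exists B, S1 B /\ Delta sig lam k (fun y => u (e y)) B x < f x * nroot d (det B) + eps).
 { move=> x0 Hi. apply: (Hh_inode (g := g) (T := T)) => //.
   have Hx0 : mesh_cl T x0 by apply: node_mesh_cl; exact: (proj1 Hi).
   have := Hsol x0 (proj1 Hi). by rewrite -{1}(Hey x0 Hx0). }
 have HDu : forall x B W1 a b, inode T x -> S1 B ->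
    Delta sig lam k (fun y => a * u y + b * W1 y) B x = a * Delta sig lam k (fun y => u (e y)) B x + b * Delta sig lam k W1 B x.
 { move=> x0 B W1 a b Hi HB. rewrite -Delta_lin. apply: (@Delta_ext _ _ _ _ (mesh_cl T)).
   - move=> y Hy. by rewrite (Hey y Hy).
   - apply: node_mesh_cl; exact: (proj1 Hi).
   - exact: (proj2 (Hsten x0 Hi) B HB). }
 have Hbz : forall z, bnode T z -> u z = g z /\ Rabs (g z) <= Gb /\ nsq (psub z (fun _ => 0)) <= Zb.
 { move=> z Hz. have Hbd := proj2 (proj2 (proj2 Hadm)) z Hz. split; [|split].
   - apply: (Hh_bnode Hz (ex_intro _ B0 HB0')). exact: (Hsol z (proj1 Hz)).
   - exact: HGb.
   - exact: (closure_bound HRb (proj1 Hbd)). }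
 have Hc0 : 0 <= c by rewrite /c; lra.
 have [z1 [Hz1b Hz1]] := @core d T (fun y => (-1) * u y + 0 * u y) k sig lam Hnode
     ltac:(move=> S HS y a Ha; cbv beta; rewrite (Hua S HS y a Ha) -!rsum_scal -rsum_add; apply: Req_le; apply: rsum_ext => k0; ring)
     Hctrl' Hsten
     ltac:(move=> x0 Hi eps He; exists B0; split=>//; rewrite HDu //;
           have := (proj1 (Hinode x0 Hi)) B0 HB0'; have := Hf0 x0 (HOmi x0 Hi); have := nroot_ge0 d (det B0);
           move=> *; nra).
 have Hsup2 : forall S, In S T -> forall y a, wts S a y ->
     rsum (fun k0 => a k0 * (fun y => 1 * u y + (-1) * (c * nsq (psub y (fun _ => 0)))) (S k0))
     <= (fun y => 1 * u y + (-1) * (c * nsq (psub y (fun _ => 0)))) y.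
 { move=> S HS y a Ha. cbv beta. rewrite (Hua S HS y a Ha).
   have Hj := jensen (fun _ => 0) Ha.
   rewrite (rsum_ext (G := fun k0 => a k0 * u (S k0) + (- c) * (a k0 * nsq (psub (S k0) (fun _ => 0))))); last first.
   { move=> k0; ring. }
   rewrite rsum_add rsum_scal. nra. }
 have Happ2 : forall x0, inode T x0 -> forall eps, 0 < eps -> exists B, S1 B /\
     Delta sig lam k (fun y => 1 * u y + (-1) * (c * nsq (psub y (fun _ => 0)))) B x0 < eps.
 { move=> x0 Hi eps He. have [B [HB HBd]] := (proj2 (Hinode x0 Hi)) eps He.
   exists B. split=>//. rewrite HDu //.
   have [Hk _] := Hsten x0 Hi. have [_ Hcm] := Hctrl' B HB.
   have Htr : tr (ctrl_mat (sig B) (lam B)) = 1 by rewrite Hcm; exact: (proj2 HB).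
   rewrite (@Delta_quad d sig lam k B x0 c (fun _ => 0) Hk Htr).
   have := HMf x0 B (HOmi x0 Hi) HB. rewrite /c. lra. }
 have [z2 [Hz2b Hz2]] := @core d T (fun y => 1 * u y + (-1) * (c * nsq (psub y (fun _ => 0)))) k sig lam Hnode
     Hsup2 Hctrl' Hsten Happ2.
 have Hex := Hcl x Hx.
 have := Hz1 _ Hex. have := Hz2 _ Hex.
 have [Hu1 [Hg1 _]] := Hbz z1 Hz1b. have [Hu2 [Hg2 Hn2]] := Hbz z2 Hz2b.
 have := nsq_ge0 (psub (e x) (fun _ => 0)).
 have := Rabs_pos Gb. have := Rle_abs Gb. have := Rle_abs (g z1). have := Rle_abs (- g z2). rewrite Rabs_Ropp.
 have : c * nsq (psub z2 (fun _ => 0)) <= c * Zb by apply: Rmult_le_compat_l.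
 have : 0 <= c * nsq (psub (e x) (fun _ => 0)) by apply: Rmult_le_pos => //; exact: nsq_ge0.
 have : 0 <= c * Zb by apply: Rmult_le_pos.
 move=> *. apply: Rabs_le. clearbody c Zb. split; lra. Qed.

Theorem lemma6p2 (d : nat) (Om : pt d -> Prop) (f g : pt d -> R)
  (F : mat d -> pt d -> Prop) (C0 : R) (sig : mat d -> mat d) (lam : mat d -> pt d) :
  (Peano.le 2 d) ->
  (exists x, Om x) -> is_open Om -> bounded_set Om -> strictly_convex Om ->
  (forall x, Om x -> 0 <= f x) -> bounded_on Om f -> cont_on Om f ->
  bounded_on (bdry Om) g -> cont_on (bdry Om) g ->
  compact_ctrl F ->
  (forall B, S1 B -> F (sig B) (lam B) /\ ctrl_mat (sig B) (lam B) = B) ->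
  (forall s l, F s l -> S1 (ctrl_mat s l) /\ sig (ctrl_mat s l) = s /\ lam (ctrl_mat s l) = l) ->
  0 < C0 ->
  (forall s l, F s l -> (forall j, 0 <= l j) /\ vsum l = C0) ->
  (forall kappa : R, exists C, 0 < C /\
     forall (T : list (simplex d)) (k : pt d -> R) (e : pt d -> pt d) (u : pt d -> R),
       admissible_mesh Om T -> shape_reg kappa T -> stencil_ok F T k ->
       valid_ext Om T e -> solves f g sig lam T k e u ->
       forall x, closure Om x -> Rabs (u (e x)) <= C)
  /\
  (forall (p : pt d) (M : R),
     (forall x (B : mat d), Om x -> S1 B -> Rabs (f x) * nroot d (det B) <= M) ->
     forall (T : list (simplex d)) (k : pt d -> R) (e : pt d -> pt d) (u v : pt d -> R),
       admissible_mesh Om T -> stencil_ok F T k ->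
       valid_ext Om T e -> solves f g sig lam T k e u ->
       interp T (fun x => M / 2 * (norm (psub x p)) ^ 2) v ->
       (exists z, bnode T z /\
          forall x, closure Om x -> u z - v z <= u (e x) - v (e x)) /\
       (exists z, bnode T z /\
          forall x, closure Om x -> u (e x) + v (e x) <= u z + v z)).
Proof.
 move=> Hd HOm Hop Hbs Hsc Hf0 Hfb Hfc Hgb Hgc Hcpt Hctrl Hctrl2 HC0 Hlam.
 have Hd1 : (1 <= d)%N by apply/leP; lia.
 split.
 - exact: (part1 Hd1 HOm Hbs Hsc Hf0 Hfb Hgb Hctrl Hlam).
 - exact: (part2 Hd1 HOm Hsc Hf0 Hctrl Hlam).
Qed.
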